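(* Let $\ell$ be a label and $\rho_1,\rho_{21},\rho_{22}$ rows such that $\rho_{21}\odot\rho_{22}$ is defined. If $\rho_1 \simeq \rho_{21}\odot\rho_{22}$, $\rho_1$ ends with $\star$, and $\ell\notin\mathit{dom}(\rho_1)$, then $\rho_1 \simeq \rho_{21}\odot(\ell{:}A;\cdot)\odot\rho_{22}$ for every type $A$.
   Context: Types and rows share one grammar: $A,B,C,\rho ::= X \mid \alpha \mid \star \mid \iota \mid A\to B \mid \forall X{:}K.\,A \mid [\rho] \mid \langle\rho\rangle \mid \cdot \mid \ell{:}A;\rho$, where $X$ ranges over type variables (bound by $\forall$), $\alpha$ over type names, $\star$ is the dynamic type (also serving as the dynamic row), $\iota$ over base types, $[\rho]$ and $\langle\rho\rangle$ are record and variant types, $\cdot$ is the empty row, $\ell$ ranges over labels, and $K\in\{\mathsf T,\mathsf R\}$ is a kind. Types are identified up to renaming of bound variables; $\mathit{ftv}(A)$ is the set of free type variables. Row matching $\rho \triangleright_\ell A,\rho'$ is defined by: $(\ell{:}A;\rho)\triangleright_\ell A,\rho$; if $\ell'\neq\ell$ and $\rho\triangleright_\ell A,\rho'$ then $(\ell'{:}B;\rho)\triangleright_\ell A,(\ell'{:}B;\rho')$; and $\star\triangleright_\ell \star,\star$. $\mathbf{QPoly}(A)$ holds iff $A$ is not of the form $\forall X{:}K.\,B$ and $\star$ occurs in $A$. Row concatenation $\rho_1\odot\rho_2$ is defined only when $\rho_1=\ell_1{:}A_1;\dots;\ell_n{:}A_n;\cdot$, and then equals $\ell_1{:}A_1;\dots;\ell_n{:}A_n;\rho_2$.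 $\mathit{dom}(\rho)$ is the set of labels in the top-level label prefix of $\rho$. A row $\rho$ ends with $\star$ if $\rho=\rho'\odot\star$ for some $\rho'$. Consistency $\simeq$ is defined inductively: $A\simeq A$; $\star\simeq A$; $A\simeq\star$; $A_1\to A_2\simeq B_1\to B_2$ if $A_1\simeq B_1$ and $A_2\simeq B_2$; $\forall X{:}K.A\simeq\forall X{:}K.B$ if $A\simeq B$; $\forall X{:}K.A\simeq B$ if $\mathbf{QPoly}(B)$, $X\notin\mathit{ftv}(B)$ and $A\simeq B$; $A\simeq\forall X{:}K.B$ if $\mathbf{QPoly}(A)$, $X\notin\mathit{ftv}(A)$ and $A\simeq B$; $[\rho_1]\simeq[\rho_2]$ and $\langle\rho_1\rangle\simeq\langle\rho_2\rangle$ if $\rho_1\simeq\rho_2$; $\ell{:}A;\rho_1\simeq B$ if $B\triangleright_\ell B',\rho_2$, $A\simeq B'$ and $\rho_1\simeq\rho_2$; $A\simeq \ell{:}B;\rho_2$ if $A\triangleright_\ell A',\rho_1$, $A'\simeq B$ and $\rho_1\simeq\rho_2$. *)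

(* Defs.v *)
From Stdlib Require Import List.
Import ListNotations.

Definition label := nat.

Inductive kind := KType | KRow.

(* Types and rows share one grammar.  Type variables X are de Bruijn indices
   (bound by TAll), so types are identified up to renaming of bound variables. *)
Inductive ty : Type :=
| TVar   (n : nat)
| TName  (a : nat)
| TDyn                        (* star : dynamic type / dynamic row *)
| TBase  (i : nat)
| TArr   (A B : ty)
| TAll   (K : kind) (A : ty)  (* forall X:K. A   (X = index 0 in A) *)
| TRecd  (r : ty)
| TVariant (r : ty)
| TEmpty
| TCons  (l : label) (A : ty) (r : ty).

Fixpoint shift (c : nat) (t : ty) : ty :=
  match t with
  | TVar n => if Nat.leb c n then TVar (S n) else TVar n
  | TName a => TName a
  | TDyn => TDyn
  | TBase i => TBase i
  | TArr A B => TArr (shift c A) (shift c B)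
  | TAll K A => TAll K (shift (S c) A)
  | TRecd r => TRecd (shift c r)
  | TVariant r => TVariant (shift c r)
  | TEmpty => TEmpty
  | TCons l A r => TCons l (shift c A) (shift c r)
  end.

Fixpoint has_dyn (t : ty) : bool :=
  match t with
  | TDyn => true
  | TArr A B => has_dyn A || has_dyn B
  | TAll _ A => has_dyn A
  | TRecd r | TVariant r => has_dyn r
  | TCons _ A r => has_dyn A || has_dyn r
  | _ => false
  end.

Definition is_forall (t : ty) : Prop :=
  match t with TAll _ _ => True | _ => False end.

Definition QPoly (t : ty) : Prop := ~ is_forall t /\ has_dyn t = true.

Inductive rmatch : ty -> label -> ty -> ty -> Prop :=
| RM_head : forall l A r, rmatch (TCons l A r) l A r
| RM_skip : forall l l' A B r r', l' <> l -> rmatch r l A r' ->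
    rmatch (TCons l' B r) l A (TCons l' B r')
| RM_dyn : forall l, rmatch TDyn l TDyn TDyn.

(* consistency.  In the forall/QPoly rules, the side condition X notin ftv(B)
   is expressed in de Bruijn form by comparing the body A with (shift 0 B). *)
Inductive consistent : ty -> ty -> Prop :=
| C_refl : forall A, consistent A A
| C_dynL : forall A, consistent TDyn A
| C_dynR : forall A, consistent A TDyn
| C_arr : forall A1 A2 B1 B2, consistent A1 B1 -> consistent A2 B2 ->
    consistent (TArr A1 A2) (TArr B1 B2)
| C_all : forall K A B, consistent A B -> consistent (TAll K A) (TAll K B)
| C_allL : forall K A B, QPoly B -> consistent A (shift 0 B) ->
    consistent (TAll K A) B
| C_allR : forall K A B, QPoly A -> consistent (shift 0 A) B ->
    consistent A (TAll K B)
| C_rec : forall r1 r2, consistent r1 r2 -> consistent (TRecd r1) (TRecd r2)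
| C_var : forall r1 r2, consistent r1 r2 ->
    consistent (TVariant r1) (TVariant r2)
| C_consL : forall l A r1 B B' r2, rmatch B l B' r2 ->
    consistent A B' -> consistent r1 r2 -> consistent (TCons l A r1) B
| C_consR : forall l A A' r1 B r2, rmatch A l A' r1 ->
    consistent A' B -> consistent r1 r2 -> consistent A (TCons l B r2).

Fixpoint rconcat (r1 r2 : ty) : option ty :=
  match r1 with
  | TEmpty => Some r2
  | TCons l A r => option_map (TCons l A) (rconcat r r2)
  | _ => None
  end.

Fixpoint dom (r : ty) : list label :=
  match r with
  | TCons l _ r' => l :: dom r'
  | _ => []
  end.

Definition ends_with_dyn (r : ty) : Prop := exists r', rconcat r' TDyn = Some r.

Definition obind (o : option ty) (f : ty -> option ty) : option ty :=
  match o with Some x => f x | None => None end.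

(* Main.v *)
Require Import Defs.
From Stdlib Require Import List.

Inductive ins (l : label) (A : ty) : ty -> ty -> Prop :=
| ins_here : forall s, ins l A s (TCons l A s)
| ins_skip : forall l' B s t, ins l A s t -> ins l A (TCons l' B s) (TCons l' B t).

Lemma ewd_inv : forall r, ends_with_dyn r ->
  r = TDyn \/ exists l B r', r = TCons l B r' /\ ends_with_dyn r'.
Proof.
  intros r [p Hp]. destruct p as [| | | | | | | | |l0 B0 p]; simpl in Hp; try discriminate.
  - inversion Hp; auto.
  - right. destruct (rconcat p TDyn) eqn:E; simpl in Hp; inversion Hp; subst.
    do 3 eexists; split; [reflexivity| exists p; exact E].
Qed.

Lemma ewd_cons : forall l B r, ends_with_dyn (TCons l B r) -> ends_with_dyn r.
Proof.
  intros l B r H. destruct (ewd_inv _ H) as [E|[l0[B0[r0[E H0]]]]]; [discriminate|].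
  inversion E; subst; auto.
Qed.

Lemma match_dyn : forall l r, ends_with_dyn r -> ~ In l (dom r) -> rmatch r l TDyn r.
Proof.
  intros l r [p Hp]. revert r Hp. induction p as [| | | | | | | | |l0 B0 _ p IHp]; intros r Hp Hn; simpl in Hp; try discriminate.
  - inversion Hp; subst. constructor.
  - destruct (rconcat p TDyn) eqn:E; simpl in Hp; inversion Hp; subst.
    simpl in Hn. constructor.
    + intro; apply Hn; auto.
    + apply IHp; auto.
Qed.

Lemma match_ewd : forall r l' A' r', rmatch r l' A' r' -> ends_with_dyn r ->
  ends_with_dyn r' /\ (forall x, In x (dom r') -> In x (dom r)).
Proof.
  intros r l' A' r' H. induction H; intros He.
  - split; [eapply ewd_cons; eauto| simpl; auto].
  - destruct (IHrmatch (ewd_cons _ _ _ He)) as [H1 H2].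
    split.
    + destruct H1 as [p Hp]. exists (TCons l' B p). simpl. rewrite Hp. reflexivity.
    + simpl. intros x [->|Hx]; auto.
  - split; [exists TEmpty; reflexivity | auto].
Qed.

Lemma match_ins : forall l A s t, ins l A s t -> forall l1 B' r2, rmatch s l1 B' r2 -> l1 <> l ->
  exists t', rmatch t l1 B' t' /\ ins l A r2 t'.
Proof.
  intros l A s t Hi. induction Hi; intros l1 B' r2 Hm Hne.
  - exists (TCons l A r2). split; [constructor; auto | constructor].
  - inversion Hm; subst.
    + exists t. split; [constructor | auto].
    + destruct (IHHi _ _ _ H6 Hne) as [t' [H1 H2]].
      exists (TCons l' B t'). split; [constructor; auto | constructor; auto].
Qed.

Lemma here_ok : forall l A r1 s, ends_with_dyn r1 -> ~ In l (dom r1) ->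
  consistent r1 s -> consistent r1 (TCons l A s).
Proof.
  intros. eapply C_consR; [apply match_dyn; eauto | constructor | auto].
Qed.

Lemma refl_ins : forall l A s t, ins l A s t -> ends_with_dyn s -> ~ In l (dom s) ->
  consistent s t.
Proof.
  intros l A s t Hi. induction Hi; intros He Hn.
  - apply here_ok; auto. constructor.
  - eapply C_consR; [constructor | constructor |].
    apply IHHi; [eapply ewd_cons; eauto | intro; apply Hn; simpl; auto].
Qed.

Lemma main_lemma : forall l A r1 s, consistent r1 s -> ends_with_dyn r1 -> ~ In l (dom r1) ->
  forall t, ins l A s t -> consistent r1 t.
Proof.
  intros l A r1 s H. induction H; intros He Hn t Hi.
  - eapply refl_ins; eauto.
  - constructor.
  - inversion Hi; subst. apply here_ok; auto. constructor.
  - destruct (ewd_inv _ He) as [E|[?[?[?[E _]]]]]; discriminate.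
  - destruct (ewd_inv _ He) as [E|[?[?[?[E _]]]]]; discriminate.
  - destruct (ewd_inv _ He) as [E|[?[?[?[E _]]]]]; discriminate.
  - inversion Hi; subst. apply here_ok; auto. constructor; auto.
  - destruct (ewd_inv _ He) as [E|[?[?[?[E _]]]]]; discriminate.
  - destruct (ewd_inv _ He) as [E|[?[?[?[E _]]]]]; discriminate.
  - simpl in Hn.
    assert (Hne : l0 <> l) by (intro; subst; apply Hn; auto).
    destruct (match_ins _ _ _ _ Hi _ _ _ H Hne) as [t' [H2 H3]].
    eapply C_consL; eauto.
    apply IHconsistent2; auto. eapply ewd_cons; eauto.
  - inversion Hi; subst.
    + apply here_ok; auto. eapply C_consR; eauto.
    + destruct (match_ewd _ _ _ _ H He) as [H2 H3].
      eapply C_consR; eauto.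
Qed.

Lemma exists_ins : forall l A r21 r22 r2, rconcat r21 r22 = Some r2 ->
  exists r, obind (rconcat r21 (TCons l A TEmpty)) (fun r' => rconcat r' r22) = Some r
            /\ ins l A r2 r.
Proof.
  intros l A r21. induction r21; intros r22 r2 H; simpl in H; try discriminate.
  - inversion H; subst. simpl. eexists; split; [reflexivity | constructor].
  - destruct (rconcat r21_2 r22) eqn:E; simpl in H; inversion H; subst.
    destruct (IHr21_2 _ _ E) as [x [H1 H2]].
    simpl. destruct (rconcat r21_2 (TCons l A TEmpty)) eqn:E2; simpl in H1; try discriminate.
    simpl. rewrite H1. simpl. eexists; split; [reflexivity | constructor; auto].
Qed.

Theorem mainTheorem11 :
  forall (l : label) (r1 r21 r22 r2 : ty),
    rconcat r21 r22 = Some r2 ->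
    consistent r1 r2 ->
    ends_with_dyn r1 ->
    ~ In l (dom r1) ->
    forall A : ty,
      exists r, obind (rconcat r21 (TCons l A TEmpty)) (fun r' => rconcat r' r22) = Some r
                /\ consistent r1 r.
Proof.
  intros l r1 r21 r22 r2 H1 H2 H3 H4 A.
  destruct (exists_ins l A _ _ _ H1) as [r [Hr Hi]].
  exists r. split; auto. eapply main_lemma; eauto.
Qed.
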